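(* In the computational model where dictionary lookup for a key of length $r$ costs $O(r)$ expected time, for a query Pauli string $P$ of weight $w$, computing \[ Z=\sum_{A\subseteq\operatorname{supp}(P)}(-2)^{|A|}\sum_{a\in\mathcal{L}_P(A)}D[(A,a)],\qquad \text{and returning } (N-Z)/2, \] by enumerating all $A\subseteq\operatorname{supp}(P)$ and all $a\in\mathcal{L}_P(A)$, performs exactly $3^w$ dictionary lookups and takes $O(w3^w)$ expected time. Here $\mathcal{L}_P(A)=\{a:A\to\{X,Y,Z\}: a(j)\neq P_j\ \forall j\in A\}$.
   Context: A phase-free $n$-qubit Pauli string is a word $P=(P_1,\dots,P_n)\in\{I,X,Y,Z\}^n$, stored sparsely as the pairs $(j,P_j)$ for $j$ in its support $\operatorname{supp}(P)=\{j:P_j\neq I\}$; its weight is $w=|\operatorname{supp}(P)|$. $D$ is a dictionary whose keys are labeled patterns $(A,a)$ with $A$ a set of qubit positions and $a:A\to\{X,Y,Z\}$, of length $|A|$, mapping to integer counts (absent keys count as zero); $N$ is an integer. *)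

(* Defs.v *)
From HB Require Import structures.
From mathcomp Require Import all_boot all_order all_algebra.
Set Implicit Arguments. Unset Strict Implicit. Unset Printing Implicit Defensive.
Import Order.TTheory GRing.Theory Num.Theory.

Inductive pauli := PI | PX | PY | PZ.

Definition pauli_to_ord (p : pauli) : 'I_4 :=
  match p with PI => inord 0 | PX => inord 1 | PY => inord 2 | PZ => inord 3 end.
Definition ord_to_pauli (i : 'I_4) : pauli :=
  match val i with 0 => PI | 1 => PX | 2 => PY | _ => PZ end.
Lemma pauli_to_ordK : cancel pauli_to_ord ord_to_pauli.
Proof. by case; rewrite /ord_to_pauli /= inordK. Qed.
HB.instance Definition _ := Finite.copy pauli (can_type pauli_to_ordK).

(* A phase-free n-qubit Pauli string.  A labeled pattern (A,a) with
   A a set of positions and a : A -> {X,Y,Z} is identified with the Pauli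
   string whose support is A and which agrees with a on A. *)
Definition pstring (n : nat) := {ffun 'I_n -> pauli}.

Definition supp n (P : pstring n) : {set 'I_n} := [set j | P j != PI].

Definition LP n (P : pstring n) (A : {set 'I_n}) : {set pstring n} :=
  [set k : pstring n | (supp k == A) && [forall j in A, k j != P j]].

Definition Zsum n (P : pstring n) (D : pstring n -> int) : int :=
  (\sum_(A : {set 'I_n} | A \subset supp P)
     (-2) ^+ #|A| * \sum_(a in LP P A) D a)%R.

Record cres := CRes { cval : int; clook : nat; ctime : nat }.

Definition others (p : pauli) : seq pauli := [seq b <- [:: PX; PY; PZ] | b != p].

Definition upd n (k : pstring n) (j : 'I_n) (b : pauli) : pstring n :=
  [ffun i => if i == j then b else k i].

(* Depth-first enumeration of all A ⊆ supp(P) and a ∈ L_P(A).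
   [s] : remaining support positions (from the sparse representation of P),
   [k] : current partial pattern, [m] : its length |A|.
   At each leaf one dictionary lookup D[k] is performed; its (expected) cost
   is [lk k]; every enumeration node and every leaf's arithmetic costs one
   unit of time. *)
Fixpoint dfs n (P : pstring n) (D : pstring n -> int) (lk : pstring n -> nat)
    (s : seq 'I_n) (k : pstring n) (m : nat) : cres :=
  match s with
  | [::] => CRes ((-2) ^+ m * D k)%R 1 (lk k + 1)
  | j :: s' =>
      let r0 := dfs P D lk s' k m in
      let rs := [seq dfs P D lk s' (upd k j b) m.+1 | b <- others (P j)] in
      CRes (cval r0 + \sum_(r <- rs) cval r)%R
           (clook r0 + sumn (map clook rs))
           (ctime r0 + sumn (map ctime rs) + 1)
  end.

Definition run_Z n (P : pstring n) D lk : cres :=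
  dfs P D lk (enum (supp P)) [ffun _ => PI] 0.

Definition run_value n (P : pstring n) D lk (N : int) : rat :=
  (((N - cval (run_Z P D lk))%:~R : rat) / 2)%R.

Definition run_lookups n (P : pstring n) D lk : nat := clook (run_Z P D lk).

(* expected total time: the control flow does not depend on lookup results,
   so by linearity of expectation it is the sum of expected step costs *)
Definition run_time n (P : pstring n) D lk : nat := (ctime (run_Z P D lk)).+1.

(* Main.v *)
Require Import Defs.
From HB Require Import structures.
From mathcomp Require Import all_boot all_order all_algebra.
Import GRing.Theory.
From mathcomp Require Import zify.
Set Implicit Arguments. Unset Strict Implicit.

Lemma count_enum_card (T : finType) (A : {pred T}) (p : pred T) : count p (enum A) = #|[predI A & p]|.
Proof. rewrite -size_filter cardE /enum_mem -filter_predI; congr size; apply: eq_filter => x; by rewrite !inE andbC. Qed.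

Lemma pauli_eqE (a b : pauli) : (a == b) = match a, b with PI,PI|PX,PX|PY,PY|PZ,PZ => true | _,_ => false end.
Proof. case: a; case: b => /=. all: try by rewrite eqxx. all: apply/eqP; discriminate. Qed.
Definition oth (p : pauli) := match p with PI => [:: PX; PY; PZ] | PX => [:: PY; PZ] | PY => [:: PX; PZ] | PZ => [:: PX; PY] end.
Lemma othersE p : others p = oth p.
Proof. by case: p; rewrite /others /= !pauli_eqE. Qed.

Lemma choicesE p a : p != PI -> (a \in PI :: others p) = (a != p).
Proof. by rewrite othersE; case: p; case: a; rewrite /= !inE !pauli_eqE. Qed.
Lemma choices_uniq p : uniq (PI :: others p).
Proof. by rewrite othersE; case: p; rewrite /= !inE !pauli_eqE. Qed.
Lemma others_nPI p b : b \in others p -> b != PI.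
Proof. by rewrite othersE; case: p; case: b; rewrite /= !inE !pauli_eqE. Qed.

Section S.
Variables (n : nat) (P : pstring n) (D : pstring n -> int) (lk : pstring n -> nat).

Definition R (s : seq 'I_n) (k k' : pstring n) : bool :=
  [forall i, if i \in s then k' i \in PI :: others (P i) else k' i == k i].

Lemma R_step j s k k' b : j \notin s -> b \in PI :: others (P j) ->
  R s (upd k j b) k' = R (j :: s) k k' && (k' j == b).
Proof.
move=> js bc.
have ic : forall i, (i \in j :: s) = (i == j) || (i \in s) by move=> i; rewrite in_cons.
apply/idP/idP.
- move/forallP=> H; have Hj := H j; rewrite (negbTE js) /upd ffunE eqxx in Hj.
  rewrite Hj andbT; apply/forallP=> i; have := H i; rewrite ic /upd ffunE.
  case: (eqVneq i j) => [->|ij] /=; first by rewrite (eqP Hj).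
  by [].
- case/andP=> /forallP H /eqP Hj; apply/forallP=> i; have := H i.
  rewrite ic /upd ffunE; case: (eqVneq i j) => [->|ij] /=.
  + by rewrite (negbTE js) Hj eqxx.
  + by [].
Qed.

Lemma val_dfs (s : seq 'I_n) (k : pstring n) (m : nat) : uniq s -> (forall j, j \in s -> k j = PI) ->
  cval (Defs.dfs P D lk s k m) =
  (\sum_(k' | R s k k') (-2) ^+ (m + count (fun i => k' i != PI) s) * D k')%R.
Proof.
elim: s k m => [|j s IH] k m /=.
  move=> _ _; rewrite (big_pred1 k) ?addn0 // => k'.
  rewrite /R /=; apply/forallP/eqP => [H|->]; last by move=> i; rewrite eqxx.
  by apply/ffunP => i; apply/eqP.
case/andP=> js us Hk.
have kj : k j = PI by apply: Hk; rewrite inE eqxx.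
have Hk' : forall b i, i \in s -> upd k j b i = PI.
  move=> b i iS; rewrite /upd ffunE; case: eqP => [E|_]; last by apply: Hk; rewrite inE iS orbT.
  by move: iS; rewrite E (negbTE js).
rewrite (partition_big (fun k' : pstring n => k' j) (fun b => b \in PI :: others (P j))); last first.
  by move=> k' /forallP /(_ j); rewrite inE eqxx.
rewrite -big_uniq ?choices_uniq // big_cons big_map.
have E : forall b, b \in PI :: others (P j) ->
  (\sum_(k' | R (j :: s) k k' && (k' j == b)) (-2) ^+ (m + count (fun i => k' i != PI) (j :: s)) * D k')%R
  = (\sum_(k' | R s (upd k j b) k') (-2) ^+ ((m + (b != PI)) + count (fun i => k' i != PI) s) * D k')%R.
  move=> b bc; rewrite (eq_bigl _ _ (fun k' => esym (R_step k k' js bc))).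
  apply: eq_bigr => k' /forallP /(_ j); rewrite (negbTE js) /upd ffunE eqxx => /eqP kj'.
  by rewrite /= kj' addnA.
rewrite E ?inE ?eqxx // addn0.
have -> : upd k j PI = k by apply/ffunP => i; rewrite /upd ffunE; case: eqP => // ->.
rewrite IH //; last by move=> i iS; apply: Hk; rewrite inE iS orbT.
apply: (congr2 (fun a b => (a + b)%R)) => //.
apply: eq_big_seq => b bo.
rewrite E ?inE ?bo ?orbT // (negbTE (others_nPI bo)) addn1 IH //.
by move=> i; apply: Hk'.
Qed.

Lemma look_dfs (s : seq 'I_n) (k : pstring n) (m : nat) : all (fun j => P j != PI) s -> clook (Defs.dfs P D lk s k m) = 3 ^ size s.
Proof.
elim: s k m => [|j s IH] k m //= /andP [Pj As].
rewrite IH // -map_comp.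
have -> : map (clook \o (fun b => Defs.dfs P D lk s (upd k j b) m.+1)) (others (P j)) = map (fun _ => 3 ^ size s) (others (P j)).
  by apply: eq_map => b /=; rewrite IH.
rewrite expnS; move: Pj; rewrite othersE; case: (P j); rewrite /= ?pauli_eqE //= => _; lia.
Qed.

Lemma card_supp_upd (k : pstring n) (j : 'I_n) (b : pauli) : #|supp (upd k j b)| <= #|supp k|.+1.
Proof.
apply: leq_trans (_ : #|j |: supp k| <= _); last by rewrite cardsU1; case: (_ \notin _).
apply: subset_leq_card; apply/subsetP => i; rewrite !inE /upd ffunE.
by case: (i == j).
Qed.

Variable c : nat.
Hypothesis Hlk : forall k, lk k <= c * (#|supp k|).+1.

Lemma time_dfs (s : seq 'I_n) (k : pstring n) (m : nat) : all (fun j => P j != PI) s ->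
  (ctime (Defs.dfs P D lk s k m)).+1 <= (c * (#|supp k| + size s).+1 + 2) * 3 ^ size s.
Proof.
elim: s k m => [|j s IH] k m /=.
  move=> _; rewrite addn0 muln1; by rewrite addn1 addn2 !ltnS.
case/andP=> Pj As.
set B := c * (#|supp k| + (size s).+1).+1 + 2.
have Hb : forall b, (ctime (Defs.dfs P D lk s (upd k j b) m.+1)).+1 <= B * 3 ^ size s.
  move=> b; apply: leq_trans (IH _ _ As) _; apply: leq_mul => //.
  rewrite leq_add2r leq_mul2l; have := card_supp_upd k j b; lia.
have H0 : (ctime (Defs.dfs P D lk s k m)).+1 <= B * 3 ^ size s.
  apply: leq_trans (IH _ _ As) _; apply: leq_mul => //.
  rewrite leq_add2r leq_mul2l; lia.
rewrite expnS mulnCA; move: Pj; rewrite othersE; case: (P j); rewrite /= ?pauli_eqE //= => _.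
all: have := Hb PX; have := Hb PY; have := Hb PZ; lia.
Qed.

End S.

Section T.
Variables (n : nat) (P : pstring n).
Let PIk : pstring n := [ffun _ => PI].

Lemma Rchar (a : pstring n) :
  R P (enum (supp P)) PIk a = (supp a \subset supp P) && [forall j in supp a, a j != P j].
Proof.
apply/forallP/andP.
- move=> H; split.
  + apply/subsetP => j; rewrite inE => aj; move: (H j); rewrite mem_enum.
    case: ifP => // _; rewrite ffunE => /eqP E; by rewrite E eqxx in aj.
  + apply/forallP => j; apply/implyP; rewrite inE => aj; move: (H j); rewrite mem_enum.
    case: ifP => jP; first by rewrite choicesE //; move: jP; rewrite inE.
    rewrite ffunE => /eqP E; by rewrite E eqxx in aj.
- case=> Hs /forallP Hf j; rewrite mem_enum.
  case: ifP => jP.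
  + have PjI : P j != PI by move: jP; rewrite inE.
    rewrite choicesE //; have := Hf j; case: (boolP (j \in supp a)) => //= ja _.
    move: ja; rewrite inE negbK => /eqP ->; by rewrite eq_sym.
  + rewrite ffunE; apply/negPn; apply/negP => aj.
    have : j \in supp a by rewrite inE.
    by move/(subsetP Hs); rewrite jP.
Qed.

Lemma count_supp (a : pstring n) : supp a \subset supp P ->
  count (fun i => a i != PI) (enum (supp P)) = #|supp a|.
Proof.
move=> Hs; rewrite count_enum_card; apply: eq_card => i; rewrite !inE.
have := subsetP Hs i; rewrite !inE.
rewrite -topredE /=; by case: (a i != PI) => [/(_ isT) ->|_]; rewrite ?andbF.
Qed.

Lemma cval_runZ (D : pstring n -> int) lk : cval (run_Z P D lk) = Zsum P D.
Proof.
rewrite /run_Z val_dfs ?enum_uniq //; last by move=> j _; rewrite ffunE.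
rewrite /Zsum.
under [RHS]eq_bigr => A _ do rewrite big_distrr /=.
rewrite (partition_big (fun a : pstring n => supp a) (fun A => A \subset supp P)); last first.
  by move=> a; rewrite Rchar => /andP [].
apply: eq_bigr => A HA; apply: eq_big => a.
- rewrite Rchar /LP inE; apply/andP/andP => [[/andP [_ H] /eqP E]|[/eqP E H]].
    by subst A; split.
  by subst A; split => //; apply/andP; split.
- rewrite Rchar => /andP [/andP [Hs _] /eqP E]; by rewrite add0n count_supp // E.
Qed.
End T.

Theorem lemma5 :
  forall c : nat, exists C : nat,
  forall (n : nat) (lk : pstring n -> nat),
    (forall k : pstring n, lk k <= c * (#|supp k|).+1) ->
  forall (P : pstring n) (D : pstring n -> int) (N : int),
    let w := #|supp P| in
    [/\ run_value P D lk N = (((N - Zsum P D)%R%:~R : rat) / 2)%R,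
        run_lookups P D lk = 3 ^ w
      & run_time P D lk <= C * maxn w 1 * 3 ^ w].
Proof.
move=> c; exists (2 * c + 2) => n lk Hlk P D N w.
have As : all (fun j => P j != PI) (enum (supp P)) by apply/allP => j; rewrite mem_enum inE.
have Hsz : size (enum (supp P)) = w by rewrite -cardE.
split.
- by rewrite /run_value cval_runZ.
- by rewrite /run_lookups /run_Z look_dfs // Hsz.
- rewrite /run_time /run_Z.
  have H0 : #|supp ([ffun _ => PI] : pstring n)| = 0.
    apply/eqP; rewrite cards_eq0; apply/eqP/setP => i; rewrite !inE ffunE.
    by rewrite pauli_eqE.
  have := time_dfs D Hlk [ffun _ => PI] 0 As.
  rewrite H0 Hsz add0n => /leq_trans; apply; rewrite -mulnA [X in _ <= X]mulnA leq_mul2r.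
  apply/orP; right.
  have h1 : 1 <= maxn w 1 := leq_maxr _ _.
  have h2 : w <= maxn w 1 := leq_maxl _ _.
  move: (maxn w 1) h1 h2 => M h1 h2; nia.
Qed.
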